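(* Let $R$ be a commutative $\mathbb{C}$-algebra, let $f,g\colon\mathrm{Mac}^2\to R$ be $\mathbb{C}$-linear maps, and let $(G,\mathrm{wt})=(V,E,\mathrm{wt})$ be a weighted graph. Then $$(f*g)(\tilde{\mathbf{X}}_G)=\sum_{A\subseteq V}f(\tilde{\mathbf{X}}_{G|_A})\cdot g(\tilde{\mathbf{X}}_{G|_{\bar A}}),$$ where $\bar A=V\setminus A$.
   Context: All graphs are finite, simple and undirected. A weighted graph is a graph $(V,E)$ with $\mathrm{wt}\colon V\to\mathbb{P}$ ($\mathbb{P}$ the positive integers). For $A\subseteq V$, $G|_A$ is the induced subgraph on $A$ with restricted weights. Proper colorings are maps $\kappa\colon V\to\mathbb{P}$ with $\kappa(u)\ne\kappa(v)$ for every edge $uv$, forming $\mathrm{Col}(G)$. The chromatic MacMahon symmetric function is $\tilde{\mathbf{X}}_G=\sum_{\kappa\in\mathrm{Col}(G)}\prod_{v\in V}x_{\kappa(v)}y_{\kappa(v)}^{\mathrm{wt}(v)}$ (equal to $1$ for the empty graph) in commuting indeterminates $x_1,x_2,\dots,y_1,y_2,\dots$; it lies in $\mathrm{Mac}^2$, the algebra of power series invariant under simultaneously permuting indices of both alphabets. $\mathrm{Mac}^2$ has basis $p_{\boldsymbol{\Lambda}}=\prod_{i}p_{\boldsymbol{\lambda}^{(i)}}$ over unordered lists $\boldsymbol{\Lambda}=(\boldsymbol{\lambda}^{(1)},\dots,\boldsymbol{\lambda}^{(\ell)})$ of vectors in $\mathbb{N}^2\setminus\{(0,0)\}$, where $p_{(a,b)}=\sum_j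 x_j^ay_j^b$ and $p_\emptyset=1$. Its coproduct is the linear map $\Delta(p_{\boldsymbol{\Lambda}})=\sum_{J\subseteq[\ell]}p_{\boldsymbol{\Lambda}|_J}\otimes p_{\boldsymbol{\Lambda}|_{\bar J}}$, with $\boldsymbol{\Lambda}|_J$ having parts $\boldsymbol{\lambda}^{(i)}$, $i\in J$, and $\bar J=[\ell]\setminus J$. The convolution of $f,g$ is $(f*g)(B)=\sum f(B_1)g(B_2)$ where $\Delta(B)=\sum B_1\otimes B_2$. *)

(* Defs.v *)
From HB Require Import structures.
From mathcomp Require Import all_boot all_order all_algebra.
From mathcomp Require Import finmap.
From mathcomp Require Import complex.
From mathcomp Require Import reals.

Set Implicit Arguments.
Unset Strict Implicit.
Unset Printing Implicit Defensive.

Import Order.TTheory GRing.Theory Num.Theory.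
Local Open Scope ring_scope.

(* A monomial prod_j x_j^(a_j) y_j^(b_j) is the finitely supported map    *)
(* j |-> (a_j, b_j).  (Index 0 is unused: indices live in P = {1,2,...}; *)
(* a monomial involving index 0 simply gets coefficient 0 below.)        *)
Definition mon := {fsfun nat -> (nat * nat)%type with (0%N, 0%N)}.

Definition mbound (m : mon) : nat := (\max_(j <- finsupp m) j.+1)%N.

Definition vsum (I : finType) (P : pred I) (lam : I -> nat * nat) : nat * nat :=
  ((\sum_(i | P i) (lam i).1)%N, (\sum_(i | P i) (lam i).2)%N).

(* Number of index assignments phi : I -> P (all values of phi below the
   bound of m, which is automatic when every lam i is nonzero) satisfying
   ok, such that prod_i x_(phi i)^(lam i).1 y_(phi i)^(lam i).2 = m. *)
Definition assign_count (I : finType) (lam : I -> nat * nat)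
    (ok : forall N, {ffun I -> 'I_N} -> bool) (m : mon) : nat :=
  #|[set phi : {ffun I -> 'I_(mbound m)} |
      [&& ok _ phi, [forall i, (0 < phi i)%N] &
          [forall j : 'I_(mbound m), m (val j) == vsum (fun i => phi i == j) lam]]]|.

Definition ps (C : nzRingType) := mon -> C.

Definition proper_col (V : finType) (e : rel V) N (k : {ffun V -> 'I_N}) : bool :=
  [forall u, forall v, e u v ==> (k u != k v)].

(* Chromatic MacMahon symmetric function:
   sum over proper colorings kappa : V -> P of prod_v x_(kappa v) y_(kappa v)^(wt v);
   its coefficient at m is the number of proper colorings with that monomial. *)
Definition chromMac (C : nzRingType) (V : finType) (e : rel V) (wt : V -> nat) : ps C :=
  fun m => (assign_count (fun v => (1%N, wt v)) (fun N k => proper_col e k) m)%:R.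

Definition chromMac_ind (C : nzRingType) (V : finType) (e : rel V) (wt : V -> nat)
    (A : {set V}) : ps C :=
  @chromMac C {v : V | v \in A} (fun u w => e (val u) (val w)) (fun u => wt (val u)).

(* Power sum basis of Mac^2: p_(a,b) = sum_j x_j^a y_j^b, p_Lambda = prod_i p_(lambda^(i)).
   Expanding the product, the coefficient of m in p_Lambda is the number of
   maps phi : [l] -> P with prod_i x_(phi i)^(a_i) y_(phi i)^(b_i) = m. *)
Definition psum (C : nzRingType) (L : seq (nat * nat)) : ps C :=
  fun m => (assign_count (fun i : 'I_(size L) => nth (0%N, 0%N) L i)
                         (fun N _ => true) m)%:R.

Definition vlist (L : seq (nat * nat)) : bool := all (fun v => v != (0%N, 0%N)) L.

Definition pexpansion (C : nzRingType) (c : seq (C * seq (nat * nat))) (B : ps C) : Prop :=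
  all (fun x => vlist x.2) c /\
  B = (fun m => \sum_(x <- c) x.1 * psum C x.2 m).

Definition inMac2 (C : nzRingType) (B : ps C) : Prop := exists c, pexpansion c B.

(* C-linear maps Mac^2 -> R (given by any function on power series whose
   restriction to Mac^2 is C-linear; only that restriction ever matters). *)
Definition Mac2_linear (C : comNzRingType) (R : lalgType C) (f : ps C -> R) : Prop :=
  forall (a : C) (B1 B2 : ps C), inMac2 B1 -> inMac2 B2 ->
    f (fun m => a * B1 m + B2 m) = a *: f B1 + f B2.

Definition lrestr (L : seq (nat * nat)) (J : {set 'I_(size L)}) : seq (nat * nat) :=
  [seq nth (0%N, 0%N) L (val i) | i <- enum J].

(* Convolution (f*g)(B) computed from an expansion B = sum_k c_k p_(Lambda_k),
   using Delta(p_Lambda) = sum_J p_(Lambda|J) (x) p_(Lambda|Jbar) and linearity. *)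
Definition conv_exp (C : comNzRingType) (R : lalgType C) (f g : ps C -> R)
    (c : seq (C * seq (nat * nat))) : R :=
  \sum_(x <- c) x.1 *: \sum_(J : {set 'I_(size x.2)})
       f (psum C (lrestr J)) * g (psum C (lrestr (~: J))).

(* Main.v *)
Require Import Defs.
From HB Require Import structures.
From mathcomp Require Import all_boot all_order all_algebra.
From mathcomp Require Import finmap.
From mathcomp Require Import complex.
From mathcomp Require Import reals.
From mathcomp Require Import zify ring.
From Stdlib Require Import FunctionalExtensionality Classical.
Set Implicit Arguments. Unset Strict Implicit. Unset Printing Implicit Defensive.
Import GRing.Theory.

Section Count.
Variables (I : finType) (mu : I -> nat * nat).

Definition mono (k : I -> nat) (j : nat) := vsum (fun i => k i == j) mu.
Definition mon_of (k : I -> nat) : mon := [fsfun j in [fset k i | i : I]%fset => mono k j].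

Lemma eq_vsum (P Q : pred I) : P =1 Q -> vsum P mu = vsum Q mu.
Proof. by move=> H; rewrite /vsum !(eq_bigl _ _ H). Qed.

Lemma vsum0 (P : pred I) : (forall i, P i = false) -> vsum P mu = (0,0)%N.
Proof. by move=> H; rewrite /vsum !big_pred0. Qed.

Lemma mon_ofE k j : mon_of k j = mono k j.
Proof.
rewrite /mon_of fsfun_fun; case: ifP => // /negbT H.
rewrite /mono vsum0 // => i; apply/negbTE; apply: contra H => /eqP <-.
by apply/imfsetP; exists i.
Qed.

Definition valid (m : mon) (k : I -> nat) := [forall i, 0 < k i] && (m == mon_of k).

Lemma validP (m : mon) k : reflect ((forall i, 0 < k i) /\ forall j, m j = mono k j) (valid m k).
Proof.
apply: (iffP andP) => [[/forallP H /eqP E]|[H E]]; split => //.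
- by move=> j; rewrite E mon_ofE.
- by apply/forallP.
- by apply/eqP/fsfunP => j; rewrite mon_ofE.
Qed.

Definition cardN N (Q : (I -> nat) -> bool) :=
  #|[set phi : {ffun I -> 'I_N} | Q (fun i => val (phi i))]|.
Definition cnt (P : (I -> nat) -> bool) (m : mon) :=
  cardN (mbound m) (fun k => P k && valid m k).

Lemma mbound_gt (m : mon) j : j \in finsupp m -> j < mbound m.
Proof. by move=> H; exact: (@leq_bigmax_seq _ _ xpredT (fun j => j.+1) j H). Qed.

Lemma mbound_le (m : mon) N : (forall j, j \in finsupp m -> j < N) -> mbound m <= N.
Proof. by move=> H; apply/bigmax_leqP_seq => j Hj _; exact: H. Qed.

Lemma mon_out (m : mon) j : mbound m <= j -> m j = (0,0)%N.
Proof.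
move=> Hj; apply: fsfun_dflt; apply/negP => /mbound_gt.
by rewrite ltnNge Hj.
Qed.

Lemma assign_cnt (ok : forall N, {ffun I -> 'I_N} -> bool) (P : (I -> nat) -> bool) (m : mon) : (forall N phi, ok N phi = P (fun i => val (phi i))) ->
  assign_count mu ok m = cnt P m.
Proof.
move=> H; rewrite /assign_count /cnt /cardN; apply: eq_card => phi; rewrite !inE H.
congr (_ && (_ && _)); apply/forallP/eqP.
- move=> Hf; apply/fsfunP => j; rewrite mon_ofE.
  case: (ltnP j (mbound m)) => Hj.
  + move/eqP: (Hf (Ordinal Hj)) => ->; apply: eq_vsum => i.
    by rewrite -val_eqE.
  + rewrite mon_out // /mono vsum0 // => i.
    by rewrite ltn_eqF // (leq_trans (ltn_ord _) Hj).
- move=> E j; apply/eqP; have -> : m (val j) = mon_of (fun i => val (phi i)) (val j) by exact: (congr1 (fun f : mon => f (val j)) E).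
  rewrite mon_ofE; apply: eq_vsum => i.
  by rewrite -val_eqE.
Qed.

Lemma vsum_nz (P : pred I) i : P i -> mu i != (0,0)%N -> vsum P mu != (0,0)%N.
Proof.
move=> Pi nz; apply: contra nz; rewrite /vsum xpair_eqE !sum_nat_eq0.
case/andP => /forall_inP H1 /forall_inP H2.
by rewrite [mu i]surjective_pairing (eqP (H1 i Pi)) (eqP (H2 i Pi)).
Qed.

Lemma valid_bound (m : mon) k : (forall i, mu i != (0,0)%N) -> valid m k -> forall i, k i < mbound m.
Proof.
move=> nz /validP [_ Hm] i; apply: mbound_gt.
by rewrite mem_finsupp Hm; apply: vsum_nz (nz i); exact: eqxx.
Qed.

Lemma cardN_ext N (Q Q' : (I -> nat) -> bool) : Q =1 Q' -> cardN N Q = cardN N Q'.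
Proof. by move=> H; rewrite (functional_extensionality _ _ H). Qed.

Lemma cnt_ext (P Q : (I -> nat) -> bool) (m : mon) : P =1 Q -> cnt P m = cnt Q m.
Proof. by move=> H; rewrite (functional_extensionality _ _ H). Qed.

Lemma cardN_bound N1 N2 (Q : (I -> nat) -> bool) : N1 <= N2 -> (forall k, Q k -> forall i, k i < N1) ->
  cardN N1 Q = cardN N2 Q.
Proof.
move=> le HQ; rewrite /cardN.
pose F (phi : {ffun I -> 'I_N1}) : {ffun I -> 'I_N2} := [ffun i => widen_ord le (phi i)].
have Finj : injective F.
  move=> p q E; apply/ffunP => i; apply/val_inj.
  by have := congr1 (fun f : {ffun I -> 'I_N2} => val (f i)) E; rewrite /F !ffunE.
rewrite -(card_imset _ Finj); apply: eq_card => psi; apply/imsetP/idP.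
- case=> phi; rewrite inE => Hp ->; rewrite inE.
  have -> : (fun i => val (F phi i)) = (fun i => val (phi i)).
    by apply: functional_extensionality => i; rewrite ffunE.
  done.
- rewrite inE => Hq; have Hb := HQ _ Hq.
  exists [ffun i => Ordinal (Hb i)].
    rewrite inE.
    have -> : (fun i => val ([ffun i => Ordinal (Hb i)] i)) = (fun i => val (psi i)).
      by apply: functional_extensionality => i; rewrite ffunE.
    done.
  by apply/ffunP => i; apply/val_inj; rewrite !ffunE.
Qed.

Lemma cnt_bound (P : (I -> nat) -> bool) (m : mon) N : (forall i, mu i != (0,0)%N) -> mbound m <= N ->
  cnt P m = cardN N (fun k => P k && valid m k).
Proof.
move=> nz le; apply: cardN_bound => // k /andP[_ Hv]; exact: valid_bound.
Qed.

Lemma cardN_split N (Q R : (I -> nat) -> bool) :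
  cardN N Q = cardN N (fun k => Q k && R k) + cardN N (fun k => Q k && ~~ R k).
Proof.
rewrite /cardN -(cardsID [set phi : {ffun I -> 'I_N} | R (fun i => val (phi i))]).
by congr (_ + _); apply: eq_card => phi; rewrite !inE // andbC.
Qed.

Lemma cnt_split (P R : (I -> nat) -> bool) (m : mon) :
  cnt P m = cnt (fun k => P k && R k) m + cnt (fun k => P k && ~~ R k) m.
Proof.
rewrite /cnt (cardN_split _ _ R); congr (_ + _); apply: cardN_ext => k;
by case: (P k); case: (R k); case: (valid m k).
Qed.

Lemma cnt_vanish (P : (I -> nat) -> bool) (m : mon) : m 0%N != (0,0)%N -> cnt P m = 0.
Proof.
move=> H; apply: eq_card0 => phi; rewrite !inE; apply/negbTE.
apply/negP => /andP[_ /validP [Hp Hm]]; move: H; rewrite Hm /mono vsum0 ?eqxx //.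
by move=> i; rewrite eqn0Ngt Hp.
Qed.

End Count.

Lemma cardN_reindex (T T' : finType) (s : T' -> T) N (Q : (T -> nat) -> bool)
  (Q' : (T' -> nat) -> bool) : bijective s ->
  (forall k, Q' (fun t => k (s t)) = Q k) -> cardN N Q' = cardN N Q.
Proof.
case=> s' sK s'K HQ; rewrite /cardN.
pose F (phi : {ffun T -> 'I_N}) : {ffun T' -> 'I_N} := [ffun t => phi (s t)].
have Finj : injective F.
  move=> p q E; apply/ffunP => t; rewrite -(s'K t).
  by have := congr1 (fun f : {ffun T' -> 'I_N} => f (s' t)) E; rewrite /F !ffunE.
symmetry; rewrite -(card_imset _ Finj); apply: eq_card => psi; apply/imsetP/idP.
- case=> phi; rewrite inE => Hp ->; rewrite inE.
  have -> : (fun i => val (F phi i)) = (fun t => val (phi (s t))).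
    by apply: functional_extensionality => i; rewrite ffunE.
  have H : Q' (fun t => val (phi (s t))) = Q (fun i => val (phi i)) := HQ _.
  by rewrite H.
- rewrite inE => Hq.
  exists [ffun t => psi (s' t)].
    rewrite inE; set g := [ffun t => psi (s' t)].
    have H : Q' (fun t => val (g (s t))) = Q (fun i => val (g i)) := HQ _.
    rewrite -H.
    have -> : (fun t => val (g (s t))) = (fun i => val (psi i)).
      by apply: functional_extensionality => i; rewrite ffunE sK.
    done.
  by apply/ffunP => i; rewrite !ffunE sK.
Qed.

Lemma cnt_reindex (T T' : finType) (s : T' -> T) (mu : T -> nat * nat) (mu' : T' -> nat * nat)
  (P : (T -> nat) -> bool) (P' : (T' -> nat) -> bool) (m : mon) :
  bijective s -> (forall t, mu' t = mu (s t)) ->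
  (forall k, P' (fun t => k (s t)) = P k) -> cnt mu' P' m = cnt mu P m.
Proof.
move=> bs Hmu HP.
have E : mu' = (fun t => mu (s t)) := functional_extensionality _ _ Hmu.
subst mu'; rewrite /cnt.
apply: (@cardN_reindex T T' s (mbound m) (fun k => P k && valid mu m k)
   (fun k => P' k && valid (fun t => mu (s t)) m k) bs) => k.
change (P' (fun t => k (s t)) && valid (fun t => mu (s t)) m (fun t => k (s t))
   = P k && valid mu m k).
rewrite (HP k); apply: (congr1 (andb (P k))).
have Hmono : forall j, mono (fun t => mu (s t)) (fun t => k (s t)) j = mono mu k j.
  move=> j; rewrite /mono /vsum.
  by rewrite [in RHS](reindex s (onW_bij _ bs)) [in RHS](reindex s (onW_bij _ bs)).
case: (bs) => s' sK s'K.
apply/validP/validP => -[Hp Hm]; split.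
- by move=> t; rewrite -(s'K t); exact: Hp.
- by move=> j; rewrite Hm Hmono.
- by move=> t; exact: Hp.
- by move=> j; rewrite Hm Hmono.
Qed.

Lemma psum_cnt (C : nzRingType) L (m : mon) :
  psum C L m = ((cnt (fun i : 'I_(size L) => nth (0,0)%N L i) (fun _ => true) m)%:R)%R.
Proof. by rewrite /psum (@assign_cnt _ _ (fun N _ => true) (fun _ => true)). Qed.

Lemma psum_vanish (C : nzRingType) L (m : mon) : m 0%N != (0,0)%N -> psum C L m = 0%R.
Proof. by move=> H; rewrite psum_cnt cnt_vanish. Qed.

Lemma psum_sub (C : nzRingType) (T : finType) (A : {set T}) (mu : T -> nat * nat) (m : mon) :
  psum C (map mu (enum A)) m =
  ((cnt (fun x : {x | x \in A} => mu (val x)) (fun _ => true) m)%:R)%R.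
Proof.
rewrite psum_cnt; congr (_%:R)%R.
have E : size (map mu (enum A)) = #|A| by rewrite size_map cardE.
pose s (i : 'I_(size (map mu (enum A)))) : {x | x \in A} :=
  exist _ (enum_val (cast_ord E i)) (enum_valP _).
apply: (@cnt_reindex _ _ s).
- apply: inj_card_bij.
    by move=> i j /(congr1 val) /enum_val_inj /cast_ord_inj.
  rewrite card_sig card_ord E.
  by rewrite (eq_card (B := A)).
- move=> i; rewrite /s /=.
  have Hi : i < size (enum A) by rewrite -(size_map mu) ltn_ord.
  rewrite (nth_map (enum_val (cast_ord E i))) //.
  by rewrite [in RHS](enum_val_nth (enum_val (cast_ord E i))).
- by move=> k.
Qed.

Definition mmerge (m m' : mon) : mon :=
  [fsfun j in (finsupp m `|` [fset (mbound m + j)%N | j in finsupp m'])%fset =>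
     if j <= mbound m then m j else m' (j - mbound m)].

Lemma mmergeE (m m' : mon) j : mmerge m m' j = if j <= mbound m then m j else m' (j - mbound m).
Proof.
rewrite /mmerge fsfun_fun; case: ifP => // /negbT H; case: ifP => Hj.
- symmetry; apply: fsfun_dflt; apply: contra H => Hs.
  by rewrite in_fsetU Hs.
- symmetry; apply: fsfun_dflt; apply: contra H => Hs.
  rewrite in_fsetU; apply/orP; right; apply/imfsetP; exists (j - mbound m) => //.
  move/negbT: Hj; rewrite -ltnNge => Hj; lia.
Qed.

Lemma mbound_mmerge (m m' : mon) : mbound (mmerge m m') <= mbound m + mbound m'.
Proof.
apply: mbound_le => j; rewrite mem_finsupp mmergeE; case: ifP => Hj H.
- by rewrite ltn_addr //; apply: mbound_gt; rewrite mem_finsupp.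
- have := @mbound_gt m' (j - mbound m); rewrite mem_finsupp => /(_ H).
  move/negbT: Hj; rewrite -ltnNge => Hj; lia.
Qed.

Section Merge.
Variables (I : finType) (mu : I -> nat * nat).
Hypothesis nz : forall i, mu i != (0,0)%N.

Lemma vsum_sub (A : {set I}) (Q : pred I) : (forall i, Q i -> i \in A) ->
  vsum Q mu = vsum (fun x : {x | x \in A} => Q (val x)) (fun x => mu (val x)).
Proof.
move=> H; have E : forall F : I -> nat, \sum_(i | Q i) F i = \sum_(i in A | Q i) F i.
  by move=> F; apply: eq_bigl => i; case: (boolP (Q i)) => Qi; rewrite ?andbT ?andbF ?H.
by rewrite /vsum !E !big_sub_cond.
Qed.

Variables (m m' : mon).
Hypothesis m'0 : m' 0%N = (0,0)%N.
Let B := mbound m.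
Variable (A : {set I}).

Definition mu1 := fun x : {x | x \in A} => mu (val x).
Definition mu2 := fun x : {x | x \in ~: A} => mu (val x).

Lemma nz1 x : mu1 x != (0,0)%N. Proof. exact: nz. Qed.
Lemma nz2 x : mu2 x != (0,0)%N. Proof. exact: nz. Qed.

Section Kappa.
Variable k : I -> nat.
Hypothesis hA : forall i, i \in A -> k i < B.
Hypothesis hA' : forall i, i \notin A -> B < k i.
Let k1 := fun x : {x | x \in A} => k (val x).
Let k2 := fun y : {y | y \in ~: A} => k (val y) - B.

Lemma mo1 j : j < B -> mono mu k j = mono mu1 k1 j.
Proof.
move=> Hj; rewrite /mono (@vsum_sub A) //.
move=> i /eqP Hi; apply/negPn/negP => /hA'; lia.
Qed.

Lemma mo2 : mono mu k B = (0,0)%N.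
Proof.
rewrite /mono vsum0 // => i; apply/negbTE; case: (boolP (i \in A)) => h.
  by have := hA h; lia.
by have := hA' h; lia.
Qed.

Lemma mo3 t : 0 < t -> mono mu k (B + t) = mono mu2 k2 t.
Proof.
move=> Ht; rewrite /mono (@vsum_sub (~: A)).
  apply: eq_vsum => y; have := valP y; rewrite inE => /hA' hy.
  change ((k (val y) == B + t) = (k (val y) - B == t)); apply/eqP/eqP; lia.
move=> i /eqP Hi; rewrite inE; apply/negP => /hA; lia.
Qed.

Lemma mo4 j : B <= j -> mono mu1 k1 j = (0,0)%N.
Proof.
move=> Hj; rewrite /mono vsum0 // => x; apply/negbTE.
change (k (val x) != j); have := hA (valP x); lia.
Qed.

Lemma mo5 : mono mu2 k2 0 = (0,0)%N.
Proof.
rewrite /mono vsum0 // => y; apply/negbTE.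
change (k (val y) - B != 0); have := valP y; rewrite inE => /hA'; lia.
Qed.

Lemma valid_mmerge : valid mu (mmerge m m') k = valid mu1 m k1 && valid mu2 m' k2.
Proof.
apply/validP/andP.
- case=> Hp Hm; split; apply/validP; split.
  + by move=> x; exact: Hp.
  + move=> j; case: (ltnP j B) => Hj.
      by rewrite -mo1 // -Hm mmergeE -/B ifT // ltnW.
    by rewrite mo4 // mon_out.
  + move=> y; have := valP y; rewrite inE => /hA' h; change (0 < k (val y) - B); lia.
  + case=> [|t]; first by rewrite m'0 mo5.
    rewrite -mo3 // -Hm mmergeE -/B ifF; last by lia.
    by congr (m' _); lia.
- case=> /validP [Hp1 Hm1] /validP [Hp2 Hm2]; split.
  + move=> i; case: (boolP (i \in A)) => h.
      exact: (Hp1 (exist _ i h)).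
    by have := hA' h; lia.
  + move=> j; rewrite mmergeE -/B; case: ifP => Hj.
      case: (ltnP j B) => Hj'.
        by rewrite mo1 // Hm1.
      have -> : j = B by lia.
      by rewrite mo2 mon_out.
    have -> : j = B + (j - B) by lia.
    rewrite mo3; last by lia.
    by rewrite -Hm2; congr (m' _); lia.
Qed.

End Kappa.
End Merge.

Lemma partN (I : finType) N (Q : (I -> nat) -> bool) (f : (I -> nat) -> {set I}) :
  cardN N Q = \sum_(A : {set I}) cardN N (fun k => Q k && (f k == A)).
Proof.
rewrite /cardN -sum1_card (partition_big (fun phi : {ffun I -> 'I_N} => f (fun i => val (phi i))) xpredT) //.
apply: eq_bigr => A _; rewrite -sum1_card; apply: eq_bigl => phi; by rewrite !inE.
Qed.

Section Card.
Variables (I : finType) (mu : I -> nat * nat).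
Hypothesis nz : forall i, mu i != (0,0)%N.
Variables (m m' : mon).
Hypothesis m'0 : m' 0%N = (0,0)%N.
Local Notation B := (mbound m).
Local Notation N := (mbound m + mbound m').+1.
Variables (P : (I -> nat) -> bool) (PA : forall A : {set I}, ({x | x \in A} -> nat) -> bool).
Hypothesis HP : forall (A : {set I}) (k : I -> nat), (forall i, i \in A -> k i < B) -> (forall i, i \notin A -> B < k i) ->
  P k = @PA A (fun x => k (val x)) && @PA (~: A) (fun y => k (val y) - B).

Section FixA.
Variable A : {set I}.
Local Notation F12 := ({ffun {x : I | x \in A} -> 'I_N} * {ffun {x : I | x \in ~: A} -> 'I_N})%type.

Definition comb (k1 : {x | x \in A} -> nat) (k2 : {x | x \in ~: A} -> nat) (i : I) : nat :=
  match (insub i : option {x | x \in A}) with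
  | Some x => k1 x
  | None => match (insub i : option {x | x \in ~: A}) with
            | Some y => B + k2 y
            | None => 0 end end.

Lemma comb1 k1 k2 i (h : i \in A) : comb k1 k2 i = k1 (exist _ i h).
Proof. by rewrite /comb insubT. Qed.

Lemma comb2 k1 k2 i (h : i \in ~: A) : comb k1 k2 i = B + k2 (exist _ i h).
Proof.
rewrite /comb insubN; last by move: h; rewrite inE.
by rewrite insubT.
Qed.

Lemma cardA : cardN N (fun k => (P k && valid mu (mmerge m m') k) &&
                   ([set i | k i < B] == A)) =
  cnt (@mu1 _ mu A) (@PA A) m * cnt (@mu2 _ mu A) (@PA (~: A)) m'.
Proof.
have nzA : forall x, @mu1 _ mu A x != (0,0)%N by move=> x; exact: nz.
have nzA' : forall x, @mu2 _ mu A x != (0,0)%N by move=> x; exact: nz.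
rewrite (@cnt_bound _ _ (@PA A) m N nzA); last by lia.
rewrite (@cnt_bound _ _ (@PA (~: A)) m' N nzA'); last by lia.
rewrite /cardN -cardsX.
set SA := [set phi : {ffun I -> 'I_N} | _ ].
set S1 := [set phi : {ffun {x | x \in A} -> 'I_N} | _ ].
set S2 := [set phi : {ffun {x | x \in ~: A} -> 'I_N} | _ ].
pose G (phi : {ffun I -> 'I_N}) :=
  ([ffun x : {x | x \in A} => phi (val x)],
   [ffun y : {x | x \in ~: A} => (inord (val (phi (val y)) - B) : 'I_N)]).
have facts : forall phi, phi \in SA ->
   (forall i, i \in A -> val (phi i) < B) /\ (forall i, i \notin A -> B < val (phi i)).
  move=> phi; rewrite inE => /andP[/andP[_ Hv] /eqP HF].
  have hA : forall i, i \in A -> val (phi i) < B by move=> i; rewrite -HF inE.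
  split => // i hi.
  have : B <= val (phi i) by move: hi; rewrite -HF inE -leqNgt.
  rewrite leq_eqVlt => /orP[/eqP E|//].
  move/validP: Hv => [_ Hm].
  have := Hm (val (phi i)); rewrite mmergeE -E leqnn mon_out // => H0.
  by move: (@vsum_nz _ mu (fun j => val (phi j) == val (phi i)) i (eqxx _) (nz i)); rewrite -/(mono _ _ _) -E -H0 eqxx.
have Ginj : {in SA &, injective G}.
  move=> phi psi Hphi Hpsi E; apply/ffunP => i; apply/val_inj.
  case: (boolP (i \in A)) => h.
    by have := congr1 (fun p : F12 => val (p.1 (exist _ i h))) E; rewrite /G !ffunE.
  have h' : i \in ~: A by rewrite inE.
  have := congr1 (fun p : F12 => val (p.2 (exist _ i h'))) E; rewrite /G !ffunE /=.
  have := (facts _ Hphi).2 _ h; have := (facts _ Hpsi).2 _ h.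
  have := ltn_ord (phi i); have := ltn_ord (psi i).
  move=> b1 b2 b3 b4; rewrite /= in b3 b4; rewrite !inordK; [move=> ?; lia | exact: leq_ltn_trans (leq_subr _ _) (ltn_ord _) ..].
rewrite -(card_in_imset Ginj); apply: eq_card => p; apply/imsetP/idP.
- case=> phi Hphi ->; have [hA hA'] := facts _ Hphi.
  move: Hphi; rewrite inE => /andP[/andP[HPk Hv] _].
  rewrite (HP hA hA') in HPk; rewrite (valid_mmerge mu m'0 hA hA') in Hv.
  case/andP: HPk => HP1 HP2; case/andP: Hv => Hv1 Hv2.
  have E1 : (fun x => val ((G phi).1 x)) = (fun x : {x | x \in A} => val (phi (val x))).
    by apply: functional_extensionality => x; rewrite /G ffunE.
  have E2 : (fun x => val ((G phi).2 x)) = (fun y : {x | x \in ~: A} => val (phi (val y)) - B).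
    apply: functional_extensionality => y; rewrite /G ffunE /= inordK //.
    exact: leq_ltn_trans (leq_subr _ _) (ltn_ord _).
  rewrite in_setX !inE E1 E2.
  by rewrite HP1 HP2 Hv1 Hv2.
- case: p => p1 p2; rewrite in_setX !inE => /andP[/andP[HP1 Hv1] /andP[HP2 Hv2]].
  set k1 := fun x => val (p1 x); set k2 := fun y => val (p2 y).
  have b1 : forall x, k1 x < B := valid_bound nzA Hv1.
  have b2 : forall y, k2 y < mbound m' := valid_bound nzA' Hv2.
  have b3 : forall y, 0 < k2 y by move: Hv2 => /validP[].
  have cb : forall i, comb k1 k2 i < N.
    move=> i; case: (boolP (i \in A)) => h.
      by rewrite comb1; have := b1 (exist _ i h); lia.
    have h' : i \in ~: A by rewrite inE.
    by rewrite (comb2 _ _ h'); have := b2 (exist _ i h'); lia.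
  have hA : forall i, i \in A -> comb k1 k2 i < B.
    by move=> i h; rewrite comb1.
  have hA' : forall i, i \notin A -> B < comb k1 k2 i.
    move=> i h; have h' : i \in ~: A by rewrite inE.
    by rewrite (comb2 _ _ h'); have := b3 (exist _ i h'); lia.
  pose phi := [ffun i => (inord (comb k1 k2 i) : 'I_N)].
  have Ek : (fun i => val (phi i)) = comb k1 k2.
    by apply: functional_extensionality => i; rewrite ffunE /= inordK.
  have Ek1 : (fun x : {x | x \in A} => comb k1 k2 (val x)) = k1.
    by apply: functional_extensionality => -[i h]; rewrite comb1.
  have Ek2 : (fun y : {x | x \in ~: A} => comb k1 k2 (val y) - B) = k2.
    apply: functional_extensionality => -[i h]; rewrite (comb2 _ _ h) /=; lia.
  exists phi.
    rewrite inE Ek (HP hA hA') (valid_mmerge mu m'0 hA hA') Ek1 Ek2.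
    rewrite HP1 HP2 Hv1 Hv2 /=.
    have Eki : forall j, nat_of_ord (phi j) = comb k1 k2 j.
      by move=> j; rewrite ffunE /= inordK.
    apply/eqP/setP => i; rewrite inE Eki; case: (boolP (i \in A)) => h.
      by rewrite hA.
    by apply/negbTE; rewrite -leqNgt ltnW // hA'.
  rewrite /G; congr (_, _); apply/ffunP => -[i h]; apply/val_inj; rewrite !ffunE /=.
    by rewrite inordK ?cb // comb1.
  have bb := b2 (exist _ i h).
  rewrite inordK ?cb // (comb2 _ _ h) inordK.
  - by rewrite /k2 /= addKn.
  - rewrite /k2 /= in bb *; lia.
  - rewrite /k2 /= in bb *; lia.
- lia.
Qed.

End FixA.

Lemma cnt_merge : cnt mu P (mmerge m m') =
  \sum_(A : {set I}) cnt (@mu1 _ mu A) (@PA A) m * cnt (@mu2 _ mu A) (@PA (~: A)) m'.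
Proof.
rewrite (@cnt_bound _ _ P (mmerge m m') N nz); last first.
  by have := mbound_mmerge m m'; lia.
rewrite (@partN I N _ (fun k : I -> nat => [set i | k i < B])).
by apply: eq_bigr => A _; exact: cardA.
Qed.

End Card.

Definition Pp (V : finType) (e : rel V) (k : V -> nat) :=
  [forall u, forall v, e u v ==> (k u != k v)].

Lemma chromMac_cnt (C : nzRingType) (V : finType) (e : rel V) (wt : V -> nat) (m : mon) :
  chromMac C e wt m = ((cnt (fun v => (1, wt v))%N (Pp e) m)%:R)%R.
Proof.
rewrite /chromMac (@assign_cnt _ _ (fun N k => proper_col e k) (Pp e)) // => N phi.
Qed.

Lemma chromMac_coprod (C : nzRingType) (V : finType) (e : rel V) (wt : V -> nat) (m m' : mon) :
  m' 0%N = (0,0)%N ->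
  chromMac C e wt (mmerge m m') =
  (\sum_(A : {set V}) chromMac_ind C e wt A m * chromMac_ind C e wt (~: A) m')%R.
Proof.
move=> m'0; rewrite chromMac_cnt.
have nz : forall v, ((1, wt v)%N : nat * nat) != (0,0)%N by [].
rewrite (@cnt_merge _ _ nz m m' m'0 (Pp e)
   (fun A k => Pp (fun u w : {v : V | v \in A} => e (val u) (val w)) k)).
  rewrite natr_sum; apply: eq_bigr => A _; rewrite natrM.
  by rewrite /chromMac_ind !chromMac_cnt.
move=> A k hA hA'; apply/idP/andP.
- move=> H; split; apply/forallP => u; apply/forallP => v; apply/implyP => huv;
    have := (forallP ((forallP H) (val u))) (val v); rewrite huv /=.
    by [].
  have := valP u; rewrite inE => /hA' h1; have := valP v; rewrite inE => /hA' h2.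
  move=> /eqP H1; apply/eqP => H2; apply: H1; rewrite /= in h1 h2; lia.
- case=> H1 H2; apply/forallP => u; apply/forallP => v; apply/implyP => huv.
  case: (boolP (u \in A)) => hu; case: (boolP (v \in A)) => hv.
  + by have := (forallP ((forallP H1) (exist _ u hu))) (exist _ v hv); rewrite /= huv.
  + by have := hA _ hu; have := hA' _ hv; move=> a b; apply/eqP => E; lia.
  + by have := hA' _ hu; have := hA _ hv; move=> a b; apply/eqP => E; lia.
  + have hu' : u \in ~: A by rewrite inE.
    have hv' : v \in ~: A by rewrite inE.
    have := (forallP ((forallP H2) (exist _ u hu'))) (exist _ v hv'); rewrite /= huv /=.
    have := hA' _ hu; have := hA' _ hv; move=> a b /eqP H; apply/eqP => E; apply: H; lia.
Qed.

Lemma vlist_nz L : vlist L -> forall i : 'I_(size L), nth (0,0)%N L i != (0,0)%N.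
Proof. by move=> /(all_nthP (0,0)%N) H i; apply: H. Qed.

Lemma psum_coprod (C : nzRingType) L (m m' : mon) : vlist L -> m' 0%N = (0,0)%N ->
  psum C L (mmerge m m') =
  (\sum_(J : {set 'I_(size L)}) psum C (lrestr J) m * psum C (lrestr (~: J)) m')%R.
Proof.
move=> vL m'0; rewrite psum_cnt.
rewrite (@cnt_merge _ _ (vlist_nz vL) m m' m'0 (fun _ => true) (fun A _ => true)) //.
rewrite natr_sum; apply: eq_bigr => J _; rewrite natrM.
by rewrite /lrestr !psum_sub.
Qed.

Local Open Scope ring_scope.

Section Mac2.
Variable C : nzRingType.

Lemma inMac2_lin a (B1 B2 : ps C) : inMac2 B1 -> inMac2 B2 -> inMac2 (fun m => a * B1 m + B2 m).
Proof.
case=> c1 [v1 E1] [c2 [v2 E2]].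
exists ([seq (a * x.1, x.2) | x <- c1] ++ c2); split.
  by rewrite all_cat all_map v1 v2.
subst; apply: functional_extensionality => m.
rewrite big_cat big_map /= mulr_sumr; congr (_ + _); apply: eq_bigr => x _.
by rewrite mulrA.
Qed.

Lemma inMac2_0 : inMac2 (fun _ : mon => (0 : C)).
Proof. by exists [::]; split => //; apply: functional_extensionality => m; rewrite big_nil. Qed.

Lemma inMac2_psum L : vlist L -> inMac2 (psum C L).
Proof.
move=> vL; exists [:: (1, L)]; split; first by rewrite /= vL.
by apply: functional_extensionality => m; rewrite big_seq1 mul1r.
Qed.

Lemma inMac2_vanish (B : ps C) (m : mon) : inMac2 B -> m 0%N != (0,0)%N -> B m = 0.
Proof.
case=> c [_ ->] H; rewrite big1 // => x _.
by rewrite psum_vanish // mulr0.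
Qed.

End Mac2.

Section IE.
Variable C : nzRingType.
Variables (I : finType) (mu : I -> nat * nat).
Hypothesis nz : forall i, mu i != (0,0)%N.

Definition constS (S : seq (I * I)) (k : I -> nat) := all (fun p => k p.1 == k p.2) S.
Definition properS (s : seq (I * I)) (k : I -> nat) := all (fun p => k p.1 != k p.2) s.

Section Quot.
Variable S : seq (I * I).
Let rS : rel I := fun u v => ((u, v) \in S) || ((v, u) \in S).
Let symS : symmetric rS. Proof. by move=> u v; rewrite /rS orbC. Qed.
Let csym := sym_connect_sym symS.
Let rt := fingraph.root rS.
Let Rs : {set I} := [set v | rt v == v].
Lemma rt_in v : rt v \in Rs.
Proof. by rewrite inE /rt root_root. Qed.
Let toR (v : I) : {x | x \in Rs} := exist _ (rt v) (rt_in v).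
Let muR (v : I) := vsum (fun w => rt w == v) mu.

Lemma toR_val (r : {x | x \in Rs}) : toR (val r) = r.
Proof. by apply: val_inj => /=; have := valP r; rewrite inE => /eqP. Qed.

Lemma sum_toR (rho : {x | x \in Rs} -> nat) j (F : I -> nat) :
  \sum_(v | rho (toR v) == j) F v = \sum_(r | rho r == j) \sum_(v | rt v == val r) F v.
Proof.
rewrite (partition_big toR (fun r => rho r == j)) //.
apply: eq_bigr => r Hr; apply: eq_bigl => v.
apply/andP/idP => [[_ /eqP <-] // | H].
have E : toR v = r by apply: val_inj; apply/eqP.
by rewrite E Hr.
Qed.

Lemma valid_toR (m : mon) (rho : {x | x \in Rs} -> nat) :
  valid mu m (fun v => rho (toR v)) = valid (fun x : {x | x \in Rs} => muR (val x)) m rho.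
Proof.
have Hm : forall j, mono mu (fun v => rho (toR v)) j = mono (fun x : {x | x \in Rs} => muR (val x)) rho j.
  by move=> j; rewrite /mono /vsum !sum_toR.
apply/validP/validP => -[Hp Hmm]; split.
- by move=> r; rewrite -(toR_val r); exact: Hp.
- by move=> j; rewrite Hmm Hm.
- by move=> v; exact: Hp.
- by move=> j; rewrite Hmm Hm.
Qed.

Lemma constS_conn k : constS S k -> forall u v, connect rS u v -> k u = k v.
Proof.
move=> /allP H u v /connectP [p]; elim: p u => [|w p IH] u /=; first by move=> _ ->.
case/andP => huw hp hv; rewrite -(IH w hp hv).
case/orP: huw => h; first by apply/eqP; exact: (H _ h).
by symmetry; apply/eqP; exact: (H _ h).
Qed.

Lemma cnt_quot (m : mon) :
  cnt mu (constS S) m = cnt (fun x : {x | x \in Rs} => muR (val x)) (fun _ => true) m.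
Proof.
rewrite /cnt /cardN.
pose H (psi : {ffun {x | x \in Rs} -> 'I_(mbound m)}) : {ffun I -> 'I_(mbound m)} :=
  [ffun v => psi (toR v)].
have Hinj : injective H.
  move=> p q E; apply/ffunP => r; rewrite -(toR_val r).
  by have := congr1 (fun f : {ffun I -> 'I_(mbound m)} => f (val r)) E; rewrite /H !ffunE.
symmetry; rewrite -(card_imset _ Hinj); apply: eq_card => phi; apply/imsetP/idP.
- case=> psi; rewrite inE => Hp ->; rewrite inE.
  have -> : (fun i => val (H psi i)) = (fun v => val (psi (toR v))).
    by apply: functional_extensionality => v; rewrite ffunE.
  have HV : valid mu m (fun v => val (psi (toR v))) =
     valid (fun x : {x | x \in Rs} => muR (val x)) m (fun r => val (psi r)) :=
     valid_toR m (fun r => val (psi r)).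
  rewrite HV; move: Hp => /= ->; rewrite andbT.
  apply/allP => p hp /=; apply/eqP; congr (val (psi _)).
  apply: val_inj => /=; apply/(fingraph.rootP csym); apply: connect1.
  by rewrite /rS -surjective_pairing hp.
- rewrite inE => /andP[Hc Hv].
  have Hk : forall v, val (phi v) = val (phi (rt v)).
    by move=> v; apply: (constS_conn Hc); exact: connect_root.
  exists [ffun r => phi (val r)].
    rewrite inE /=.
    have -> : (fun i => val ([ffun r => phi (val r)] i)) =
              (fun r : {x | x \in Rs} => val (phi (val r))) by
      apply: functional_extensionality => r; rewrite ffunE.
    have HV : valid mu m (fun v => val (phi (val (toR v)))) =
     valid (fun x : {x | x \in Rs} => muR (val x)) m (fun r => val (phi (val r))) :=
     valid_toR m (fun r => val (phi (val r))).
    rewrite -HV.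
    have -> : (fun v => val (phi (val (toR v)))) = (fun i => val (phi i)); last by [].
    by apply: functional_extensionality => v; rewrite /= -Hk.
  by apply/ffunP => v; rewrite !ffunE /=; apply: val_inj; rewrite /= -Hk.
Qed.

Lemma quot : inMac2 (fun m => ((cnt mu (constS S) m)%:R : C)).
Proof.
pose L := map muR (enum Rs).
have vL : vlist L.
  rewrite /vlist all_map; apply/allP => v; rewrite mem_enum inE => /eqP hv /=.
  by apply: (@vsum_nz _ mu _ v) => //; rewrite hv.
have -> : (fun m => ((cnt mu (constS S) m)%:R : C)) = psum C L.
  apply: functional_extensionality => m.
  by rewrite /L psum_sub cnt_quot.
exact: inMac2_psum.
Qed.

End Quot.

Lemma ie s : forall S, inMac2 (fun m => ((cnt mu (fun k => constS S k && properS s k) m)%:R : C)).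
Proof.
elim: s => [|x s IH] S.
  have -> : (fun k => constS S k && properS [::] k) = constS S.
    by apply: functional_extensionality => k; rewrite andbT.
  exact: quot.
have E : forall m : mon, ((cnt mu (fun k => constS S k && properS (x :: s) k) m)%:R : C) =
   -1 * (cnt mu (fun k => constS (x :: S) k && properS s k) m)%:R +
   (cnt mu (fun k => constS S k && properS s k) m)%:R.
  move=> m; rewrite (cnt_split mu (fun k => constS S k && properS s k) (fun k => k x.1 == k x.2)).
  rewrite natrD.
  rewrite (@cnt_ext _ mu (fun k => (constS S k && properS s k) && (k x.1 == k x.2))
             (fun k => constS (x :: S) k && properS s k)); last first.
    by move=> k; rewrite /constS /= andbC andbA.
  rewrite (@cnt_ext _ mu (fun k => (constS S k && properS s k) && ~~ (k x.1 == k x.2))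
             (fun k => constS S k && properS (x :: s) k)); last first.
    by move=> k; rewrite /properS /= -!andbA; congr (_ && _); rewrite andbC.
  by rewrite mulN1r addrA addNr add0r.
rewrite (functional_extensionality _ _ E).
exact: inMac2_lin (IH (x :: S)) (IH S).
Qed.

End IE.

Lemma chromMac_Mac2 (C : nzRingType) (V : finType) (e : rel V) (wt : V -> nat) :
  inMac2 (chromMac C e wt).
Proof.
pose s := [seq p <- enum {: V * V} | e p.1 p.2].
have nz : forall v, ((1, wt v)%N : nat * nat) != (0,0)%N by [].
have -> : chromMac C e wt = (fun m => ((cnt (fun v => (1, wt v))%N
     (fun k => constS [::] k && properS s k) m)%:R : C)).
  apply: functional_extensionality => m; rewrite chromMac_cnt; congr (_%:R).
  apply: cnt_ext => k; rewrite /Pp /properS /=.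
  apply/forallP/allP => [H p | H u].
    rewrite mem_filter => /andP[hp _].
    exact: (implyP (forallP (H p.1) p.2) hp).
  apply/forallP => v; apply/implyP => huv.
  by apply: (H (u, v)); rewrite mem_filter huv mem_enum.
exact: ie.
Qed.

Local Open Scope ring_scope.

Section Lin.
Variables (C : fieldType) (R : comAlgType C).

Section F.
Variable f : ps C -> R.
Hypothesis hf : Mac2_linear f.

Lemma lin0 : f (fun _ => 0) = 0.
Proof.
have := hf 1 (inMac2_0 C) (inMac2_0 C).
have -> : (fun m : mon => 1 * (0 : C) + 0) = (fun _ => 0).
  by apply: functional_extensionality => m; rewrite mulr0 addr0.
rewrite scale1r => H.
by apply: (addrI (f (fun _ => 0))); rewrite addr0 -H.
Qed.

Lemma linZ a B : inMac2 B -> f (fun m => a * B m) = a *: f B.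
Proof.
move=> HB; have := hf a HB (inMac2_0 C).
have -> : (fun m => a * B m + 0) = (fun m => a * B m).
  by apply: functional_extensionality => m; rewrite addr0.
by rewrite lin0 addr0.
Qed.

Lemma lin_sum n (a : 'I_n -> C) (B : 'I_n -> ps C) : (forall i, inMac2 (B i)) ->
  f (fun m => \sum_i a i * B i m) = \sum_i a i *: f (B i) /\
  inMac2 (fun m => \sum_i a i * B i m).
Proof.
elim: n a B => [|n IH] a B HB.
  have -> : (fun m => \sum_(i < 0) a i * B i m) = (fun _ => 0).
    by apply: functional_extensionality => m; rewrite big_ord0.
  by rewrite lin0 big_ord0; split => //; exact: inMac2_0.
have [IH1 IH2] := IH (fun i => a (widen_ord (leqnSn n) i)) (fun i => B (widen_ord (leqnSn n) i)) (fun i => HB _).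
have -> : (fun m => \sum_(i < n.+1) a i * B i m) = (fun m => a ord_max * B ord_max m +
   \sum_(i < n) a (widen_ord (leqnSn n) i) * B (widen_ord (leqnSn n) i) m).
  by apply: functional_extensionality => m; rewrite big_ord_recr addrC.
rewrite hf // IH1 big_ord_recr /= addrC; split => //.
exact: inMac2_lin.
Qed.

End F.

Variables (f g : ps C -> R).
Hypothesis hf : Mac2_linear f.
Hypothesis hg : Mac2_linear g.

Lemma bil n : forall (u w : 'I_n -> ps C), (forall i, inMac2 (u i)) -> (forall i, inMac2 (w i)) ->
  (forall m m' : mon, m 0%N = (0,0)%N -> m' 0%N = (0,0)%N -> \sum_i u i m * w i m' = 0) ->
  \sum_i f (u i) * g (w i) = 0.
Proof.
elim: n => [|n IH] u w Hu Hw H; first by rewrite big_ord0.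
case: (classic (exists a : 'I_n.+1 -> C, exists k, a k != 0 /\
   forall m' : mon, m' 0%N = (0,0)%N -> \sum_i a i * w i m' = 0)); last first.
  move=> Hnot.
  have Hu0 : forall i, u i = (fun _ => 0).
    move=> i; apply: functional_extensionality => m.
    case: (eqVneq (m 0%N) (0,0)%N) => h0; last by rewrite (inMac2_vanish (Hu i)).
    apply: NNPP => Hne; apply: Hnot; exists (fun i => u i m), i; split.
      by apply/eqP.
    by move=> m' h0'; exact: H.
  by rewrite big1 // => i _; rewrite Hu0 lin0 // mul0r.
case=> a [k [ak Ha]].
pose b (j : 'I_n) := a (lift k j) / a k.
pose u' (j : 'I_n) := fun m => - b j * u k m + u (lift k j) m.
pose w' (j : 'I_n) := w (lift k j).
have Hu' : forall j, inMac2 (u' j) by move=> j; exact: inMac2_lin.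
have Hwk : w k = (fun m' => \sum_j (- b j) * w' j m').
  apply: functional_extensionality => m'.
  case: (eqVneq (m' 0%N) (0,0)%N) => h0.
    have := Ha m' h0; rewrite (bigD1_ord k) //= => /eqP; rewrite addr_eq0 => /eqP E.
    apply: (mulfI ak); rewrite E mulr_sumr -sumrN; apply: eq_bigr => j _.
    rewrite /b /w'; field; exact: ak.
  rewrite (inMac2_vanish (Hw k)) //; symmetry; rewrite big1 // => j _.
  by rewrite /w' (inMac2_vanish (Hw _)) // mulr0.
have IHapp := IH u' w' Hu' (fun j => Hw _).
have IHh : forall m m' : mon, m 0%N = (0,0)%N -> m' 0%N = (0,0)%N ->
     \sum_i u' i m * w' i m' = 0.
  move=> m m' h0 h0'; transitivity (\sum_i u i m * w i m'); last exact: H.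
  rewrite (bigD1_ord k) //= Hwk /=.
  rewrite mulr_sumr -[in RHS]big_split /=; apply: eq_bigr => j _; rewrite /u' /w'; ring.
have E := IHapp IHh.
transitivity (\sum_(i < n) f (u' i) * g (w' i)); last exact: E.
rewrite (bigD1_ord k) //= Hwk.
have [-> _] := lin_sum hg (fun j => - b j) (B := w') (fun j => Hw _).
rewrite mulr_sumr -[in LHS]big_split /=; apply: eq_bigr => j _.
rewrite /u' hf ?Hu //.
by rewrite /w' mulrDl -scalerAl -scalerAr.
Qed.

Fixpoint allMac (s : seq (ps C * ps C)) : Prop :=
  if s is p :: s' then (inMac2 p.1 /\ inMac2 p.2) /\ allMac s' else True.

Lemma allMac_nth s (x0 : ps C * ps C) (i : nat) : allMac s -> (i < size s)%N -> inMac2 (nth x0 s i).1 /\ inMac2 (nth x0 s i).2.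
Proof.
elim: s i => [|p s IH] [|i] //= [Hp Hs] Hi; first by [].
exact: IH.
Qed.

Lemma allMac_cat s1 s2 : allMac s1 -> allMac s2 -> allMac (s1 ++ s2).
Proof. by elim: s1 => [|p s1 IH] //= [Hp Hs] H2; split => //; exact: IH. Qed.

Lemma allMac_map (T : Type) (r : seq T) (F : T -> ps C * ps C) :
  (forall x, inMac2 (F x).1 /\ inMac2 (F x).2) -> allMac (map F r).
Proof. by move=> H; elim: r => [|x r IH] //=; split. Qed.

Lemma allMac_flatten (T : eqType) (r : seq T) (G : T -> seq (ps C * ps C)) :
  (forall x, x \in r -> allMac (G x)) -> allMac (flatten (map G r)).
Proof.
elim: r => [|x r IH] //= H; apply: allMac_cat; first by apply: H; rewrite inE eqxx.
by apply: IH => y hy; apply: H; rewrite inE hy orbT.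
Qed.

Lemma bil_seq (s : seq (ps C * ps C)) : allMac s ->
  (forall m m' : mon, m 0%N = (0,0)%N -> m' 0%N = (0,0)%N -> \sum_(p <- s) p.1 m * p.2 m' = 0) ->
  \sum_(p <- s) f p.1 * g p.2 = 0.
Proof.
move=> Hs H; pose x0 : ps C * ps C := (fun _ => 0, fun _ => 0).
rewrite (big_nth x0) big_mkord.
apply: (bil (u := fun i : 'I_(size s) => (nth x0 s i).1) (w := fun i : 'I_(size s) => (nth x0 s i).2)).
- by move=> i; have [] := allMac_nth x0 Hs (ltn_ord i).
- by move=> i; have [] := allMac_nth x0 Hs (ltn_ord i).
- by move=> m m' h0 h0'; have := H m m' h0 h0'; rewrite (big_nth x0) big_mkord.
Qed.

End Lin.

Local Open Scope ring_scope.

Lemma vlist_lrestr L (J : {set 'I_(size L)}) : vlist L -> vlist (lrestr J).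
Proof.
move=> vL; rewrite /vlist /lrestr all_map; apply/allP => i _ /=.
exact: vlist_nz.
Qed.

Lemma inMac2_scale (C : nzRingType) a (B : ps C) : inMac2 B -> inMac2 (fun m => a * B m).
Proof.
move=> HB; have := inMac2_lin a HB (inMac2_0 C).
have -> : (fun m => a * B m + 0) = (fun m => a * B m); last by [].
by apply: functional_extensionality => m; rewrite addr0.
Qed.

Theorem corollary3p14 (K : realType) (R : comAlgType K[i])
    (f g : ps K[i] -> R) (hf : Mac2_linear f) (hg : Mac2_linear g)
    (V : finType) (e : rel V) (e_sym : symmetric e) (e_irr : irreflexive e)
    (wt : V -> nat) (wt_pos : forall v, (0 < wt v)%N) :
  (* X_G lies in Mac^2, so (f*g)(X_G) is defined ... *)
  inMac2 (chromMac K[i] e wt) /\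
  (* ... and, computed from (any, equivalently the unique) p-expansion of X_G: *)
  (forall c, pexpansion c (chromMac K[i] e wt) ->
     conv_exp f g c =
     \sum_(A : {set V}) f (chromMac_ind K[i] e wt A) * g (chromMac_ind K[i] e wt (~: A))).
Proof.
split; first exact: chromMac_Mac2.
move=> c [vc Ec].
have vx : forall x, x \in c -> vlist x.2 by move=> x hx; exact: (allP vc x hx).
pose s1 := flatten [seq [seq ((fun m => x.1 * psum K[i] (lrestr J) m), psum K[i] (lrestr (~: J)))
            | J <- index_enum {set 'I_(size x.2)}] | x <- c].
pose s2 := [seq ((fun m => -1 * chromMac_ind K[i] e wt A m), chromMac_ind K[i] e wt (~: A))
            | A <- index_enum {set V}].
have key := @bil_seq _ _ f g hf hg (s1 ++ s2).
have E1 : \sum_(p <- s1) f p.1 * g p.2 = conv_exp f g c.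
  rewrite /s1 /conv_exp big_flatten big_map !big_seq; apply: eq_bigr => x hx.
  rewrite big_map scaler_sumr; apply: eq_bigr => J _ /=.
  rewrite (linZ hf); last by apply: inMac2_psum; apply: vlist_lrestr; exact: vx.
  by rewrite -scalerAl.
have E2 : \sum_(p <- s2) f p.1 * g p.2 =
    - \sum_(A : {set V}) f (chromMac_ind K[i] e wt A) * g (chromMac_ind K[i] e wt (~: A)).
  rewrite /s2 big_map -sumrN; apply: eq_bigr => A _ /=.
  by rewrite linZ //; [rewrite scaleN1r mulNr | exact: chromMac_Mac2].
rewrite big_cat /= E1 E2 in key.
apply/eqP; rewrite -subr_eq0; apply/eqP; apply: key.
- apply: allMac_cat.
    apply: allMac_flatten => x hx; apply: allMac_map => J /=; split.
      by apply: inMac2_scale; apply: inMac2_psum; apply: vlist_lrestr; exact: vx.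
    by apply: inMac2_psum; apply: vlist_lrestr; exact: vx.
  by apply: allMac_map => A /=; split; [apply: inMac2_scale|]; exact: chromMac_Mac2.
- move=> m m' h0 h0'.
  have E3 : \sum_(p <- s1) p.1 m * p.2 m' = chromMac K[i] e wt (mmerge m m').
    rewrite Ec /s1 big_flatten big_map !big_seq; apply: eq_bigr => x hx.
    rewrite big_map psum_coprod ?vx // mulr_sumr; apply: eq_bigr => J _ /=.
    by rewrite mulrA.
  have E4 : \sum_(p <- s2) p.1 m * p.2 m' = - chromMac K[i] e wt (mmerge m m').
    rewrite chromMac_coprod // /s2 big_map -sumrN; apply: eq_bigr => A _ /=.
    by rewrite mulN1r mulNr.
  rewrite big_cat E3 E4; exact: subrr.
Qed.
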